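(* Let $\beta>0$, $0<c<1$, $M\ge1$ and $\mathcal{D}=\{d_1<\cdots<d_M\}$ a set of positive integers. Then $\check{P}_{\mathcal{D},0}(x;\beta,c)=\check{\Xi}_{\mathcal{D}}(x;\beta+1,c)$, and for every $n\geq 1$ the multi-indexed Meixner polynomials satisfy the forward and backward shift relations $$\frac{c(\beta+M)}{\check{\Xi}_{\mathcal{D}}(x+1;\beta,c)}\Bigl(\check{\Xi}_{\mathcal{D}}(x+1;\beta+1,c)\check{P}_{\mathcal{D},n}(x;\beta,c)-\check{\Xi}_{\mathcal{D}}(x;\beta+1,c)\check{P}_{\mathcal{D},n}(x+1;\beta,c)\Bigr)=(1-c)n\,\check{P}_{\mathcal{D},n-1}(x;\beta+1,c),$$ $$\frac{c(x+\beta+M)\check{\Xi}_{\mathcal{D}}(x;\beta,c)\check{P}_{\mathcal{D},n-1}(x;\beta+1,c)-x\,\check{\Xi}_{\mathcal{D}}(x+1;\beta,c)\check{P}_{\mathcal{D},n-1}(x-1;\beta+1,c)}{c(\beta+M)\,\check{\Xi}_{\mathcal{D}}(x;\beta+1,c)}=\check{P}_{\mathcal{D},n}(x;\beta,c).$$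
   Context: $(a)_k$ denotes the Pochhammer symbol. For $n\in\mathbb{Z}_{\ge0}$, $\check{P}_n(x;\beta,c)={}_2F_1(-n,-x;\beta;1-c^{-1})=\sum_{k=0}^{n}\frac{(-n)_k(-x)_k}{(\beta)_k k!}(1-c^{-1})^k$ (Meixner polynomial, normalised by $\check P_n(0)=1$), and $\check{\xi}_{\mathrm{v}}(x;\beta,c)={}_2F_1(-\mathrm{v},-x;\beta;1-c)$. The Casoratian is $\mathrm{W}_{\mathrm{C}}[f_1,\dots,f_k](x)=\det\bigl(f_l(x+j-1)\bigr)_{1\le j,l\le k}$. For parameters $(\beta,c)$ put $\mathcal{C}_{\mathcal{D}}(\beta,c)=\prod_{1\le j<k\le M}\frac{(1-c)(d_k-d_j)}{\beta+j-1}$, $\tilde d_{\mathcal{D},n}(\beta,c)^2=\prod_{j=1}^M\frac{(1-c)(n+d_j+\beta)}{\beta+j-1}$, $\mathcal{C}_{\mathcal{D},n}(\beta,c)=(-1)^M\mathcal{C}_{\mathcal{D}}(\beta,c)\tilde d_{\mathcal{D},n}(\beta,c)^2$, and define $\check{\Xi}_{\mathcal{D}}(x;\beta,c)=\mathcal{C}_{\mathcal{D}}(\beta,c)^{-1}\mathrm{W}_{\mathrm{C}}[\check{\xi}_{d_1},\dots,\check{\xi}_{d_M}](x)$, $\check{P}_{\mathcal{D},n}(x;\beta,c)=\mathcal{C}_{\mathcal{D},n}(\beta,c)^{-1}c^{-x}\mathrm{W}_{\mathrm{C}}[\check{\xi}_{d_1},\dots,\check{\xi}_{d_M},c^{x}\check{P}_n](x)$,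 all functions carrying the parameters $(\beta,c)$; the objects with parameters $(\beta+1,c)$ are defined by the same formulas with $\beta\to\beta+1$. *)

(* Defs.v *)
From HB Require Import structures.
From mathcomp Require Import all_boot all_order all_algebra.
From mathcomp Require Import reals exp.
Set Implicit Arguments. Unset Strict Implicit. Unset Printing Implicit Defensive.
Import Order.TTheory GRing.Theory Num.Theory.
Local Open Scope ring_scope.

Section MeixnerDefs.
Variable R : realType.

Definition poch (a : R) (k : nat) : R := \prod_(i < k) (a + i%:R).

Definition Pm (n : nat) (x beta c : R) : R :=
  \sum_(k < n.+1) poch (- n%:R) k * poch (- x) k / (poch beta k * (k`!)%:R)
     * (1 - c^-1) ^+ k.

Definition xiv (v : nat) (x beta c : R) : R :=
  \sum_(k < v.+1) poch (- v%:R) k * poch (- x) k / (poch beta k * (k`!)%:R)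
     * (1 - c) ^+ k.

Definition casoratian (k : nat) (f : 'I_k -> R -> R) (x : R) : R :=
  \det (\matrix_(j < k, l < k) f l (x + j%:R)).

(* D = {d_0 < ... < d_{M-1}} given by d : nat -> nat (only d 0..d (M-1) matter);
   indices are shifted by one w.r.t. the paper (paper's d_j is d (j-1)). *)
Definition CD (M : nat) (d : nat -> nat) (beta c : R) : R :=
  \prod_(k < M) \prod_(j < k)
     ((1 - c) * ((d k)%:R - (d j)%:R) / (beta + j%:R)).

Definition dtilde2 (M : nat) (d : nat -> nat) (n : nat) (beta c : R) : R :=
  \prod_(j < M) ((1 - c) * (n%:R + (d j)%:R + beta) / (beta + j%:R)).

Definition CDn (M : nat) (d : nat -> nat) (n : nat) (beta c : R) : R :=
  (-1) ^+ M * CD M d beta c * dtilde2 M d n beta c.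

Definition XiD (M : nat) (d : nat -> nat) (x beta c : R) : R :=
  (CD M d beta c)^-1 *
  casoratian (fun l : 'I_M => fun y => xiv (d l) y beta c) x.

Definition PDn (M : nat) (d : nat -> nat) (n : nat) (x beta c : R) : R :=
  (CDn M d n beta c)^-1 * powR c (- x) *
  casoratian (fun l : 'I_M.+1 => fun y =>
      if (l < M)%N then xiv (d l) y beta c else powR c y * Pm n y beta c) x.

End MeixnerDefs.

(* Main.v *)
Require Import Defs.
From HB Require Import structures.
From mathcomp Require Import all_boot all_order all_algebra.
From mathcomp Require Import reals exp.
From mathcomp Require Import ring lra zify.
Import Order.TTheory GRing.Theory Num.Theory.
Local Open Scope ring_scope.
Set Implicit Arguments. Unset Strict Implicit. Unset Printing Implicit Defensive.

Section Sums.
Variable R : realType.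

Definition Fh (v : nat) (y b z : R) : R :=
  \sum_(k < v.+1) poch (- v%:R) k * poch (- y) k / (poch b k * (k`!)%:R) * z ^+ k.

Lemma xivE v y b c : xiv v y b c = Fh v y b (1 - c). Proof. by []. Qed.
Lemma PmE v y b c : Pm v y b c = Fh v y b (1 - c^-1). Proof. by []. Qed.

Lemma poch0 (a : R) : poch a 0 = 1. Proof. by rewrite /poch big_ord0. Qed.
Lemma pochS (a : R) k : poch a k.+1 = poch a k * (a + k%:R).
Proof. by rewrite /poch big_ord_recr. Qed.
Lemma pochSl (a : R) k : poch a k.+1 = a * poch (a + 1) k.
Proof.
rewrite /poch big_ord_recl addr0; congr (_ * _); apply: eq_bigr => i _.
by rewrite /= -natr1; ring.
Qed.
Lemma poch_gt0 (b : R) k : 0 < b -> 0 < poch b k.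
Proof.
move=> b0; rewrite /poch; apply: prodr_gt0 => i _.
by apply: (lt_le_trans b0); rewrite lerDl ler0n.
Qed.
Lemma poch_neq0 (b : R) k : 0 < b -> poch b k != 0.
Proof. by move=> b0; rewrite gt_eqF // poch_gt0. Qed.
Lemma fact_neq0 k : (k`!)%:R != 0 :> R.
Proof. by rewrite pnatr_eq0 -lt0n fact_gt0. Qed.

Lemma pochy (a : R) k : poch (a - 1) k.+1 - poch a k.+1 = - (k.+1)%:R * poch a k.
Proof. rewrite pochSl pochS subrK -natr1; ring. Qed.

Lemma pochv_last v : poch (- v%:R) v.+1 = 0 :> R.
Proof. by rewrite pochS addNr mulr0. Qed.

Lemma S1 v (y b z : R) : 0 < b ->
  Fh v.+1 (y + 1) b z - Fh v.+1 y b z = (v.+1)%:R * z / b * Fh v y (b + 1) z.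
Proof.
move=> b0; rewrite /Fh -sumrB big_ord_recl !poch0 subrr add0r mulr_sumr.
apply: eq_bigr => k _ /=.
have hb := poch_neq0 k (ltr_wpDr ler01 b0 : 0 < b + 1).
have hf := fact_neq0 k.
have hk : (k.+1)%:R != 0 :> R by rewrite pnatr_eq0.
have bn0 : b != 0 by rewrite gt_eqF.
have e1 : poch (- (y + 1)) k.+1 = poch (- y) k.+1 - (k.+1)%:R * poch (- y) k.
  by rewrite opprD -[LHS](subrK (poch (- y) k.+1)) pochy; ring.
rewrite e1 (pochSl (- (v.+1)%:R)) (pochSl b) factS natrM exprS.
have -> : - (v.+1)%:R + 1 = - v%:R :> R by rewrite -natr1; ring.
by field; rewrite nat1r hf hb bn0 hk.
Qed.

Lemma Fh0 y b z : Fh 0 y b z = 1.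
Proof. by rewrite /Fh big_ord1 !poch0 fact0 expr0 !mulr1 mul1r invr1. Qed.

Lemma Fh_ext v y b z :
  Fh v y b z = \sum_(k < v.+2) poch (- v%:R) k * poch (- y) k / (poch b k * (k`!)%:R) * z ^+ k.
Proof. by rewrite [RHS]big_ord_recr /= pochv_last !mul0r addr0. Qed.

Lemma bk_neq0 (b : R) k : 0 < b -> b + 1 + k%:R != 0.
Proof. move=> b0; rewrite gt_eqF //; have hk : (0:R) <= k%:R := ler0n _ _; lra. Qed.

Lemma S2 v (y b z : R) : 0 < b ->
  b * Fh v.+1 y b z + (v.+1)%:R * Fh v y (b + 1) z = ((v.+1)%:R + b) * Fh v.+1 y (b + 1) z.
Proof.
move=> b0; rewrite (Fh_ext v y (b + 1) z) /Fh !mulr_sumr -big_split /=; apply: eq_bigr => -[[|k] hk] _.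
  by rewrite !poch0 fact0 expr0; field.
have b1 : 0 < b + 1 by rewrite ltr_wpDr.
have hb := poch_neq0 k b1.
have hf := fact_neq0 k.+1.
have bn0 : b != 0 by rewrite gt_eqF.
have hbk := bk_neq0 k b0.
rewrite (pochSl (- (v.+1)%:R)) (pochS (- v%:R)) (pochSl b) (pochS (b + 1)).
have -> : - (v.+1)%:R + 1 = - v%:R :> R by rewrite -natr1; ring.
by field; rewrite hf hb bn0 hbk.
Qed.

Lemma Bsh v (y b z : R) : 0 < b ->
  (y + b) * Fh v y (b + 1) z - y * Fh v (y - 1) (b + 1) z = b * Fh v y b z.
Proof.
move=> b0; rewrite /Fh !mulr_sumr -sumrB; apply: eq_bigr => -[[|k] hk] _.
  by rewrite !poch0 fact0 expr0; field.
have b1 : 0 < b + 1 by rewrite ltr_wpDr.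
have hb := poch_neq0 k b1.
have hf := fact_neq0 k.+1.
have bn0 : b != 0 by rewrite gt_eqF.
have hbk := bk_neq0 k b0.
rewrite (pochSl (- y)) (pochS (- (y - 1))) (pochSl b) (pochS (b + 1)).
have -> : - (y - 1) = - y + 1 by ring.
by field; rewrite hf hb bn0 hbk.
Qed.

Lemma Fsh v (y b z : R) : 0 < b ->
  Fh v (y + 1) b z - (1 - z) * Fh v y b z = z * (v%:R + b) / b * Fh v y (b + 1) z.
Proof.
move=> b0; have bn0 : b != 0 by rewrite gt_eqF.
case: v => [|v]; first by rewrite !Fh0; field.
have h1 := S1 v y z b0; have h2 := S2 v y z b0.
have -> : Fh v.+1 (y + 1) b z - (1 - z) * Fh v.+1 y b z
  = (Fh v.+1 (y + 1) b z - Fh v.+1 y b z) + z * Fh v.+1 y b z by ring.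
rewrite h1.
transitivity (z / b * (b * Fh v.+1 y b z + (v.+1)%:R * Fh v y (b + 1) z)); first by field.
by rewrite h2; field.
Qed.

Lemma Frec v (y b z : R) : 0 < b ->
  (y + b) * Fh v (y + 1) b z - ((1 - z) * (y + b) + y) * Fh v y b z
  + (1 - z) * y * Fh v (y - 1) b z = z * (v%:R + b) * Fh v y b z.
Proof.
move=> b0; have bn0 : b != 0 by rewrite gt_eqF.
have h1 := Fsh v y z b0; have h2 := Fsh v (y - 1) z b0.
rewrite subrK in h2.
have h3 := Bsh v y z b0.
have -> : (y + b) * Fh v (y + 1) b z - ((1 - z) * (y + b) + y) * Fh v y b z
  + (1 - z) * y * Fh v (y - 1) b z
  = (y + b) * (Fh v (y + 1) b z - (1 - z) * Fh v y b z)
    - y * (Fh v y b z - (1 - z) * Fh v (y - 1) b z) by ring.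
rewrite h1 h2.
have -> : (y + b) * (z * (v%:R + b) / b * Fh v y (b + 1) z) -
  y * (z * (v%:R + b) / b * Fh v (y - 1) (b + 1) z)
  = z * (v%:R + b) / b * ((y + b) * Fh v y (b + 1) z - y * Fh v (y - 1) (b + 1) z) by ring.
rewrite h3; by field.
Qed.

End Sums.

Section Dets.
Variable R : comNzRingType.

Definition CM (m : nat) (f : nat -> R -> R) (x : R) : 'M[R]_m :=
  \matrix_(j < m, l < m) f l (x + j%:R).

Lemma CM_eq m f g x : (forall l, (l < m)%N -> forall y, f l y = g l y) ->
  CM m f x = CM m g x.
Proof. by move=> h; apply/matrixP => j l; rewrite !mxE h. Qed.

Lemma CM_eqx m f x x' : x = x' -> CM m f x = CM m f x'.
Proof. by move->. Qed.

Lemma CM_col'_last m f x i :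
  row' ord_max (col' i (CM m.+1 f x)) = CM m (fun l => f (bump i l)) x.
Proof. by apply/matrixP => j l; rewrite !mxE lift_max. Qed.

Lemma CM_col'_first m f x i :
  row' ord0 (col' i (CM m.+1 f x)) = CM m (fun l => f (bump i l)) (x + 1).
Proof.
apply/matrixP => j l; rewrite !mxE lift0; congr (f _ _).
by rewrite -natr1; ring.
Qed.

Lemma sign_sq m : (-1) ^+ m * (-1) ^+ m = 1 :> R.
Proof. by rewrite -exprD addnn -mul2n exprM sqrrN expr1n expr1n. Qed.

Lemma cramer p (Q : 'M[R]_p) (mm : 'I_p -> R) i :
  \sum_j cofactor Q j i * (\sum_l Q j l * mm l) = \det Q * mm i.
Proof.
have h := mul_adj_mx Q.
transitivity (\sum_l (\sum_j cofactor Q j i * Q j l) * mm l).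
  under eq_bigr do rewrite mulr_sumr.
  rewrite exchange_big /=; apply: eq_bigr => l _; rewrite mulr_suml; apply: eq_bigr => j _.
  by rewrite mulrA.
transitivity (\sum_l ((\det Q)%:M : 'M[R]_p) i l * mm l).
  by apply: eq_bigr => l _; rewrite -h !mxE; congr (_ * _); apply: eq_bigr => j _; rewrite mxE.
rewrite (bigD1 i) //= big1 ?addr0; first by rewrite mxE eqxx mulr1n.
by move=> l /negPf hl; rewrite mxE eq_sym hl mulr0n mul0r.
Qed.

Lemma replace_col p (Q : 'M[R]_p) (z : 'I_p -> R) i :
  \det (\matrix_(j, l) (if l == i then z j else Q j l)) = \sum_j z j * cofactor Q j i.
Proof.
rewrite (expand_det_col _ i); apply: eq_bigr => j _; rewrite mxE eqxx; congr (_ * _).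
rewrite /cofactor; congr (_ * _); congr (\det _); apply/matrixP => r s; rewrite !mxE.
by rewrite eq_sym (negPf (neq_lift _ _)).
Qed.


Definition nn m (f : nat -> R -> R) (x : R) (i : nat) : R := (-1) ^+ i * \det (CM m.+1 (fun l => f (bump i l)) x).

Lemma Bg_det m (f : nat -> R -> R) (x : R) (y : nat -> R) :
  \det (\matrix_(r < m.+2, i < m.+2) (if (r < m.+1)%N then f i (x + r%:R) else y i))
  = (-1) ^+ m.+1 * \sum_(i < m.+2) y i * nn m f x i.
Proof.
rewrite (expand_det_row _ ord_max) mulr_sumr; apply: eq_bigr => i _.
rewrite mxE /= ltnn /cofactor /nn.
have -> : row' ord_max (col' i (\matrix_(r < m.+2, i0 < m.+2)
     (if (r < m.+1)%N then f i0 (x + r%:R) else y i0))) = CM m.+1 (fun l => f (bump i l)) x.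
  by apply/matrixP => j l; rewrite !mxE lift_max ltn_ord.
rewrite exprD /=; ring.
Qed.

Lemma Zn m (f : nat -> R -> R) (x : R) j : (j <= m)%N -> \sum_(i < m.+2) f i (x + j%:R) * nn m f x i = 0.
Proof.
move=> hj; have := Bg_det m f x (fun i => f i (x + j%:R)).
rewrite (@determinant_alternate _ _ _ ord_max (inord j)).
- move/(congr1 (fun t => (-1) ^+ m.+1 * t)); rewrite mulr0 mulrA sign_sq mul1r.
  by move/esym.

- by rewrite -(inj_eq val_inj) /= inordK; lia.
- by move=> i; rewrite !mxE /= ltnn inordK; [case: ifP | lia].
Qed.

Lemma E_last m (f : nat -> R -> R) (x : R) :
  \det (CM m.+2 f x) = (-1) ^+ m.+1 * \sum_(i < m.+2) f i (x + (m.+1)%:R) * nn m f x i.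
Proof.
rewrite -(Bg_det m f x (fun i => f i (x + (m.+1)%:R))); congr (\det _); apply/matrixP => r i; rewrite !mxE.
case: ifP => // /negbT; rewrite -leqNgt => h.
by have -> : (r : nat) = m.+1 by apply/eqP; rewrite eqn_leq h -ltnS ltn_ord.
Qed.

Lemma E_last' m (f : nat -> R -> R) (x : R) :
  \sum_(i < m.+2) f i (x + (m.+1)%:R) * nn m f x i = (-1) ^+ m.+1 * \det (CM m.+2 f x).
Proof. by rewrite E_last mulrA sign_sq mul1r. Qed.

Lemma E_first m (f : nat -> R -> R) (x : R) :
  \det (CM m.+2 f (x - 1)) = \sum_(i < m.+2) f i (x - 1) * nn m f x i.
Proof.
rewrite (expand_det_row _ ord0); apply: eq_bigr => i _.
rewrite mxE /cofactor CM_col'_first /nn addr0 subrK add0n.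
by [].
Qed.


Lemma bump_lt (m l : nat) : (l < m)%N -> bump m l = l.
Proof. by move=> h; rewrite /bump leqNgt h add0n. Qed.

Lemma bump_same (m : nat) : bump m m = m.+1.
Proof. by rewrite /bump leqnn add1n. Qed.

Lemma sum_skip m (g : nat -> R) :
  \sum_(i < m.+2) g i = g m + \sum_(l < m.+1) g (bump m l).
Proof.
by rewrite (bigD1_ord (inord m)) //= inordK.
Qed.

Lemma sum_two p (F : 'I_p.+1 -> R) : (ord0 : 'I_p.+1) != ord_max ->
  (forall j : 'I_p.+1, j != ord0 -> j != ord_max -> F j = 0) ->
  \sum_j F j = F ord0 + F ord_max.
Proof.
move=> h0 hF; rewrite (bigD1 ord0) //= (bigD1 ord_max) /=; last by rewrite eq_sym.
by rewrite big1 ?addr0 // => j /andP [hj0 hjm]; apply: hF.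
Qed.

Lemma GA m (f : nat -> R -> R) (lam : nat -> R) (b c x : R) :
  (0 < m)%N ->
  (forall i y, (y + b) * f i (y + 1) - (y + b + c * y) * f i y + c * y * f i (y - 1)
     = lam i * f i y) ->
  (x + b + m%:R) * \det (CM m f x) * \det (CM m.+2 f x)
  - c * x * \det (CM m f (x + 1)) * \det (CM m.+2 f (x - 1))
  = (lam m.+1 - lam m) * \det (CM m.+1 f x) * \det (CM m.+1 (fun l => f (bump m l)) x).
Proof.
move=> m0 hrec.
set n := nn m f x.
have key : forall y, \sum_(i < m.+2) lam i * f i y * n i
   = (y + b) * \sum_(i < m.+2) f i (y + 1) * n i
     - (y + b + c * y) * \sum_(i < m.+2) f i y * n i
     + c * y * \sum_(i < m.+2) f i (y - 1) * n i.
  move=> y; rewrite !mulr_sumr -sumrB -big_split /=; apply: eq_bigr => i _.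
  rewrite -hrec; ring.
have Z := Zn f x.
have Lmid : forall j, (0 < j)%N -> (j < m)%N ->
    \sum_(i < m.+2) lam i * f i (x + j%:R) * n i = 0.
  move=> [|j] // _ hj; rewrite key.
  have -> : x + (j.+1)%:R + 1 = x + (j.+2)%:R by rewrite -[(j.+2)%:R]natr1 addrA.
  have -> : x + (j.+1)%:R - 1 = x + j%:R by rewrite -natr1; ring.
  rewrite !Z; [ring | lia | lia | lia].
have Lm : \sum_(i < m.+2) lam i * f i (x + m%:R) * n i
    = (x + m%:R + b) * ((-1) ^+ m.+1 * \det (CM m.+2 f x)).
  rewrite key E_last mulrA sign_sq mul1r.
  have -> : x + m%:R + 1 = x + (m.+1)%:R by rewrite -natr1 addrA.
  have -> : x + m%:R - 1 = x + (m.-1)%:R by rewrite -[in LHS](prednK m0) -natr1; ring.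
  rewrite (Z m m) // (Z m m.-1); [ring | lia].
have L0 : \sum_(i < m.+2) lam i * f i (x + (0%N)%:R) * n i
    = c * x * \det (CM m.+2 f (x - 1)).
  rewrite addr0 key E_first.
  have := Z m 0%N (leq0n _); have := Z m 1%N m0; rewrite addr0 => -> ->; ring.
pose Q := CM m.+1 (fun l => f (bump m l)) x.
pose mm := fun l : 'I_m.+1 => (lam (bump m l) - lam m) * n (bump m l).
have hz : forall j : 'I_m.+1, \sum_l Q j l * mm l
    = \sum_(i < m.+2) lam i * f i (x + j%:R) * n i.
  move=> j; have Zj := Z m j (ltn_ord j).
  transitivity (\sum_(i < m.+2) (lam i - lam m) * f i (x + j%:R) * n i).
    rewrite (sum_skip m (fun i => (lam i - lam m) * f i (x + j%:R) * n i)) /= subrr !mul0r add0r.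
    by apply: eq_bigr => l _; rewrite mxE /mm; ring.
  have -> : \sum_(i < m.+2) (lam i - lam m) * f i (x + j%:R) * n i
     = \sum_(i < m.+2) lam i * f i (x + j%:R) * n i
       - lam m * \sum_(i < m.+2) f i (x + j%:R) * n i.
    by rewrite mulr_sumr -sumrB; apply: eq_bigr => i _; ring.
  by rewrite Zj mulr0 subr0.
have cr := cramer Q mm ord_max.
rewrite (eq_bigr (fun j => cofactor Q j ord_max * \sum_(i < m.+2) lam i * f i (x + j%:R) * n i))
  in cr; last by move=> j _; rewrite hz.
have h0m : (ord0 : 'I_m.+1) != ord_max by rewrite -(inj_eq val_inj) /=; lia.
rewrite sum_two // in cr; last first.
  move=> j hj0 hjm; rewrite Lmid ?mulr0 //.
    by rewrite lt0n; apply: contra hj0 => /eqP h; apply/eqP/val_inj.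
  have := ltn_ord j; rewrite ltnS leq_eqVlt => /orP [/eqP h|//].
  by exfalso; move/negP: hjm; apply; apply/eqP/val_inj.
rewrite L0 Lm /cofactor /= CM_col'_first CM_col'_last in cr.
rewrite /mm /n /nn /= bump_same in cr.
have E : forall y, CM m (fun l => f (bump m (bump m l))) y = CM m f y.
  by move=> y; apply: CM_eq => l hl z; rewrite !bump_lt.
have E2 : CM m.+1 (fun l => f (bump m.+1 l)) x = CM m.+1 f x.
  by apply: CM_eq => l hl z; rewrite bump_lt.
rewrite !E E2 /Q add0n addnn -mul2n exprM sqrrN expr1n expr1n mul1r exprS in cr.
move: cr; rewrite -signr_odd; case: (odd m) => /= cr.
- rewrite !expr1 in cr; apply/eqP; rewrite -subr_eq0; apply/eqP.
  move/eqP: cr; rewrite -subr_eq0 => /eqP cr; rewrite -[RHS]cr; ring.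
- rewrite !expr0 in cr; apply/eqP; rewrite -subr_eq0; apply/eqP.
  move/eqP: cr; rewrite -subr_eq0 => /eqP cr; rewrite -[RHS]oppr0 -[in RHS]cr; ring.
Qed.

Lemma DJ m (f : nat -> R -> R) x :
  \det (CM m.+1 (fun l => f (bump m l)) (x + 1)) * \det (CM m.+1 f x)
  = \det (CM m.+1 (fun l => f (bump m l)) x) * \det (CM m.+1 f (x + 1))
    + \det (CM m f (x + 1)) * \det (CM m.+2 f x).
Proof.
set n := nn m f x.
have Z := Zn f x.
pose Q := CM m.+1 (fun l => f (bump m l)) (x + 1).
pose mm := fun l : 'I_m.+1 => n (bump m l).
pose A := fun j : 'I_m.+1 => \sum_(i < m.+2) f i (x + (j.+1)%:R) * n i.
have hz : forall j : 'I_m.+1, \sum_l Q j l * mm l = A j - f m (x + (j.+1)%:R) * n m.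
  move=> j; rewrite /A (sum_skip m (fun i => f i (x + (j.+1)%:R) * n i)) /=.
  rewrite addrC addKr; apply: eq_bigr => l _; rewrite mxE /mm; congr (f _ _ * _).
  by rewrite -natr1; ring.
have cr := cramer Q mm ord_max.
rewrite (eq_bigr (fun j => cofactor Q j ord_max * A j
   - n m * (f m (x + (j.+1)%:R) * cofactor Q j ord_max))) in cr; last first.
  by move=> j _; rewrite hz; ring.
rewrite sumrB -mulr_sumr in cr.
have RC : \sum_(j < m.+1) f m (x + (j.+1)%:R) * cofactor Q j ord_max = \det (CM m.+1 f (x + 1)).
  rewrite -replace_col; congr (\det _); apply/matrixP => j l; rewrite !mxE.
  case: eqP => [->|hl] /=.
    by congr (f _ _); rewrite -natr1; ring.
  rewrite bump_lt //; have := ltn_ord l; rewrite ltnS leq_eqVlt => /orP [/eqP h|//].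
  by exfalso; apply: hl; apply/val_inj.
rewrite RC (bigD1 ord_max) //= big1 ?addr0 in cr; last first.
  move=> j hj; rewrite /A Z ?mulr0 //.
  have := ltn_ord j; rewrite ltnS leq_eqVlt => /orP [/eqP h|//].
  by exfalso; move/negP: hj; apply; apply/eqP/val_inj.
rewrite /A E_last' /cofactor CM_col'_last /mm /n /nn /= bump_same in cr.
have E : forall y, CM m (fun l => f (bump m (bump m l))) y = CM m f y.
  by move=> y; apply: CM_eq => l hl z; rewrite !bump_lt.
have E2 : CM m.+1 (fun l => f (bump m.+1 l)) x = CM m.+1 f x.
  by apply: CM_eq => l hl z; rewrite bump_lt.
rewrite !E E2 /Q addnn -mul2n exprM sqrrN expr1n expr1n mul1r exprS in cr.
move: cr; rewrite -signr_odd; case: (odd m) => /= cr.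
- rewrite !expr1 in cr; apply/eqP; rewrite -subr_eq0; apply/eqP.
  move/eqP: cr; rewrite -subr_eq0 => /eqP cr; rewrite -[RHS]oppr0 -[in RHS]cr; ring.
- rewrite !expr0 in cr; apply/eqP; rewrite -subr_eq0; apply/eqP.
  move/eqP: cr; rewrite -subr_eq0 => /eqP cr; rewrite -[RHS]cr; ring.
Qed.

Lemma CM_scale m (k : nat -> R) (f : nat -> R -> R) x :
  \det (CM m (fun l y => k l * f l y) x) = (\prod_(l < m) k l) * \det (CM m f x).
Proof.
have -> : CM m (fun l y => k l * f l y) x = CM m f x *m diag_mx (\row_(l < m) k l).
  by apply/matrixP => i j; rewrite mul_mx_diag !mxE mulrC.
rewrite det_mulmx det_diag mulrC; congr (_ * _); apply: eq_bigr => l _; by rewrite mxE.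
Qed.

Lemma LR m (f : nat -> R -> R) (c x : R) : (forall y, f m (y + 1) = c * f m y) ->
  \det (CM m.+1 f x) = (-1) ^+ m * f m x * \det (CM m (fun l y => f l (y + 1) - c * f l y) x).
Proof.
move=> he.
pose S : 'M[R]_m.+1 := \matrix_(i, j) ((i : nat) == j.+1)%:R.
pose T : 'M[R]_m.+1 := 1%:M - c *: S.
have dT : \det T = 1.
  rewrite det_trig; last first.
    apply/is_trig_mxP => i j hij; rewrite !mxE.
    have -> : (i == j) = false by apply/negbTE; rewrite neq_ltn hij.
    have -> : ((i : nat) == j.+1) = false by apply/negbTE; rewrite neq_ltn; apply/orP; left; lia.
    by rewrite mulr0 mulr0n subr0.
  rewrite big1 // => i _; rewrite !mxE eqxx.
  have -> : ((i : nat) == i.+1) = false by lia.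
  by rewrite mulr0 subr0.
set A := CM m.+1 f x.
have SA : forall (r l : 'I_m.+1), (S *m A) r l = if (0 < r)%N then f l (x + (r.-1)%:R) else 0.
  move=> r l; rewrite mxE; case: r => [[|j] hj] /=.
    by rewrite big1 // => k _; rewrite mxE /= mul0r.
  rewrite (bigD1 (inord j)) //= big1 ?addr0.
    by rewrite !mxE /= inordK ?eqxx ?mul1r //; lia.
  move=> k hk; rewrite !mxE /=.
  have -> : (j.+1 == k.+1) = false.
    apply/negbTE; apply: contra hk => /eqP [hjk]; apply/eqP/val_inj; rewrite /= inordK //; lia.
  by rewrite mul0r.
have TA : forall (r l : 'I_m.+1), (T *m A) r l = f l (x + r%:R) - c * (if (0 < r)%N then f l (x + (r.-1)%:R) else 0).
  move=> r l; have -> : (T *m A) r l = A r l - c * (S *m A) r l.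
    by rewrite mulmxBl mul1mx -scalemxAl !mxE.
  by rewrite SA mxE.
have -> : \det A = \det (T *m A) by rewrite det_mulmx dT mul1r.
rewrite (expand_det_col _ ord_max) big_ord_recl big1 ?addr0; last first.
  move=> i _; rewrite TA /=.
  have -> : x + (bump 0 i)%:R = x + i%:R + 1 by rewrite /bump /= -natr1 addrA.
  by rewrite he subrr mul0r.
rewrite TA /= addr0 mulr0 subr0 /cofactor add0n.
suff -> : row' ord0 (col' ord_max (T *m A)) = CM m (fun l y => f l (y + 1) - c * f l y) x by ring.
apply/matrixP => j l; rewrite [LHS]mxE [LHS]mxE TA [RHS]mxE lift0 lift_max /=.
congr (f _ _ - c * f _ _); by rewrite -natr1 addrA.
Qed.

End Dets.
Section Main.
Variable R : realType.
Variables (b c : R) (M : nat) (d : nat -> nat).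
Hypotheses (b0 : 0 < b) (c0 : 0 < c) (c1 : c < 1).

Let cn0 : c != 0. Proof. by rewrite gt_eqF. Qed.
Let bn0 : b != 0. Proof. by rewrite gt_eqF. Qed.

Lemma pw1 y : powR c (y + 1) = powR c y * c.
Proof. by rewrite powRD ?powRr1 ?(ltW c0) //; apply/implyP => _. Qed.
Lemma pwm1 y : powR c (y - 1) = powR c y / c.
Proof. by rewrite powRB ?powRr1 ?(ltW c0) //; apply/implyP => _. Qed.
Lemma pw_neq0 y : powR c y != 0.
Proof. by rewrite gt_eqF // powR_gt0. Qed.

Lemma rec_xi v y : (y + b) * xiv v (y + 1) b c - (y + b + c * y) * xiv v y b c
  + c * y * xiv v (y - 1) b c = v%:R * (1 - c) * xiv v y b c.
Proof.
have h := Frec v y (1 - c) b0; rewrite !xivE.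
have e1 : 1 - (1 - c) = c by ring.
rewrite e1 in h.
transitivity ((y + b) * Fh v (y + 1) b (1 - c) - (c * (y + b) + y) * Fh v y b (1 - c) +
  c * y * Fh v (y - 1) b (1 - c) - b * (1 - c) * Fh v y b (1 - c)); first by ring.
by rewrite h; ring.
Qed.

Lemma rec_g n y : (y + b) * (powR c (y + 1) * Pm n (y + 1) b c)
  - (y + b + c * y) * (powR c y * Pm n y b c)
  + c * y * (powR c (y - 1) * Pm n (y - 1) b c)
  = - ((n%:R + b) * (1 - c)) * (powR c y * Pm n y b c).
Proof.
have h := Frec n y (1 - c^-1) b0; rewrite !PmE pw1 pwm1.
have e1 : 1 - (1 - c^-1) = c^-1 by ring.
rewrite e1 in h.
transitivity (c * powR c y * ((y + b) * Fh n (y + 1) b (1 - c^-1) -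
  (c^-1 * (y + b) + y) * Fh n y b (1 - c^-1) + c^-1 * y * Fh n (y - 1) b (1 - c^-1))).
  by field.
by rewrite h; field.
Qed.

Lemma rec_e y : (y + b) * powR c (y + 1) - (y + b + c * y) * powR c y
  + c * y * powR c (y - 1) = - (b * (1 - c)) * powR c y.
Proof. by rewrite pw1 pwm1; field. Qed.

Definition Phi n : nat -> R -> R := fun l y =>
  if (l < M)%N then xiv (d l) y b c
  else if l == M then powR c y * Pm n y b c else powR c y.
Definition lamf n : nat -> R := fun l =>
  if (l < M)%N then (d l)%:R * (1 - c)
  else if l == M then - ((n%:R + b) * (1 - c)) else - (b * (1 - c)).

Lemma recPhi n i y : (y + b) * Phi n i (y + 1) - (y + b + c * y) * Phi n i y
  + c * y * Phi n i (y - 1) = lamf n i * Phi n i y.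
Proof.
rewrite /Phi /lamf; case: ifP => _; first exact: rec_xi.
case: ifP => _; first exact: rec_g.
exact: rec_e.
Qed.

Lemma Lxi v y : xiv v (y + 1) b c - c * xiv v y b c
  = (1 - c) * (v%:R + b) / b * xiv v y (b + 1) c.
Proof.
have h := Fsh v y (1 - c) b0; rewrite !xivE.
have e1 : 1 - (1 - c) = c by ring.
by rewrite e1 in h.
Qed.

Lemma Lg n y : powR c (y + 1) * Pm n.+1 (y + 1) b c - c * (powR c y * Pm n.+1 y b c)
  = (c - 1) * (n.+1)%:R / b * (powR c y * Pm n y (b + 1) c).
Proof.
have h := S1 n y (1 - c^-1) b0; rewrite !PmE pw1.
transitivity (c * powR c y * (Fh n.+1 (y + 1) b (1 - c^-1) - Fh n.+1 y b (1 - c^-1))).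
  by ring.
by rewrite h; field; rewrite ?bn0 ?cn0.
Qed.


Definition Kf (l : nat) : R := (1 - c) * ((d l)%:R + b) / b.
Definition xif (b' : R) : nat -> R -> R := fun l y => xiv (d l) y b' c.
Definition Fe : nat -> R -> R := fun l y => if (l < M)%N then xiv (d l) y b c else powR c y.
Definition PDf n (b' : R) : nat -> R -> R := fun l y =>
  if (l < M)%N then xiv (d l) y b' c else powR c y * Pm n y b' c.

Lemma W_Fe y : \det (CM M.+1 Fe y)
  = (-1) ^+ M * powR c y * (\prod_(l < M) Kf l) * \det (CM M (xif (b + 1)) y).
Proof.
rewrite (LR (c := c)); last by move=> z; rewrite /Fe ltnn pw1 mulrC.
rewrite /Fe ltnn -!mulrA; congr (_ * (_ * _)); rewrite -CM_scale; congr (\det _).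
by apply: CM_eq => l hl z; rewrite hl Lxi.
Qed.

Lemma W_G n y : \det (CM M.+2 (Phi n.+1) y)
  = (-1) ^+ M.+1 * powR c y * ((\prod_(l < M) Kf l) * ((c - 1) * (n.+1)%:R / b))
    * \det (CM M.+1 (PDf n (b + 1)) y).
Proof.
have hM1 : (M.+1 < M)%N = false by lia.
have hM2 : (M.+1 == M) = false by lia.
pose kap := fun l : nat => if (l < M)%N then Kf l else (c - 1) * (n.+1)%:R / b.
have -> : \prod_(l < M) Kf l * ((c - 1) * (n.+1)%:R / b) = \prod_(l < M.+1) kap l.
  rewrite big_ord_recr /= /kap ltnn; congr (_ * _); apply: eq_bigr => l _.
  by rewrite ltn_ord.
rewrite (LR (c := c)); last first.
  by move=> z; rewrite /Phi hM1 hM2 pw1 mulrC.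
rewrite /Phi hM1 hM2 -!mulrA; congr (_ * (_ * _)).
rewrite -CM_scale; congr (\det _); apply: CM_eq => l hl z.
rewrite /kap /PDf; case: ifP => hlM; first by rewrite Lxi.
have -> : l = M by apply/eqP; rewrite eqn_leq -ltnS hl leqNgt hlM.
by rewrite eqxx Lg.
Qed.

Lemma XiD_E (b' : R) y : XiD M d y b' c = (CD M d b' c)^-1 * \det (CM M (xif b') y).
Proof. by []. Qed.

Lemma PDn_E n (b' : R) y :
  PDn M d n y b' c = (CDn M d n b' c)^-1 * powR c (- y) * \det (CM M.+1 (PDf n b') y).
Proof. by []. Qed.

Lemma Phi_PD n y : \det (CM M.+1 (Phi n) y) = \det (CM M.+1 (PDf n b) y).
Proof.
congr (\det _); apply: CM_eq => l hl z; rewrite /Phi /PDf; case: ifP => // hlM.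
have -> : l = M by apply/eqP; rewrite eqn_leq -ltnS hl leqNgt hlM.
by rewrite eqxx.
Qed.

Lemma Phi_Fe n y : \det (CM M.+1 (fun l => Phi n (bump M l)) y) = \det (CM M.+1 Fe y).
Proof.
congr (\det _); apply: CM_eq => l hl z; rewrite /Phi /Fe; case: (ltnP l M) => hlM.
  by rewrite bump_lt // hlM.
have -> : l = M by apply/eqP; rewrite eqn_leq -ltnS hl hlM.
have hM1 : (M.+1 < M)%N = false by lia.
have hM2 : (M.+1 == M) = false by lia.
by rewrite bump_same hM1 hM2.
Qed.

Lemma Phi_X n y : \det (CM M (Phi n) y) = \det (CM M (xif b) y).
Proof. by congr (\det _); apply: CM_eq => l hl z; rewrite /Phi hl. Qed.


Hypothesis dinc : forall i j : nat, (i < j)%N -> (j < M)%N -> (d i < d j)%N.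

Lemma bj_gt0 (b' : R) (j : nat) : 0 < b' -> 0 < b' + j%:R.
Proof. by move=> h; have hj : (0:R) <= j%:R := ler0n _ _; lra. Qed.

Lemma w_gt0 : 0 < 1 - c. Proof. by rewrite subr_gt0. Qed.

Lemma CD_gt0 (b' : R) : 0 < b' -> 0 < CD M d b' c.
Proof.
move=> hb; rewrite /CD; apply: prodr_gt0 => k _; apply: prodr_gt0 => j _.
apply: divr_gt0; last exact: bj_gt0.
apply: mulr_gt0; first exact: w_gt0.
rewrite subr_gt0 ltr_nat; apply: dinc => //; exact: (ltn_trans (ltn_ord j)).
Qed.

Lemma dt_gt0 n (b' : R) : 0 < b' -> 0 < dtilde2 M d n b' c.
Proof.
move=> hb; rewrite /dtilde2; apply: prodr_gt0 => j _.
apply: divr_gt0; last exact: bj_gt0.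
apply: mulr_gt0; first exact: w_gt0.
have h1 : (0:R) <= n%:R := ler0n _ _; have h2 : (0:R) <= (d j)%:R := ler0n _ _; lra.
Qed.

Lemma PK_gt0 : 0 < \prod_(l < M) Kf l.
Proof.
apply: prodr_gt0 => l _; rewrite /Kf; apply: divr_gt0 => //.
apply: mulr_gt0; first exact: w_gt0.
have h2 : (0:R) <= (d l)%:R := ler0n _ _; by apply: (le_lt_trans h2); rewrite ltrDl.
Qed.

Lemma tele (b' : R) k : 0 < b' ->
  \prod_(j < k) ((b' + 1 + j%:R) / (b' + j%:R)) = (b' + k%:R) / b'.
Proof.
move=> hb; have hb' : b' != 0 by rewrite gt_eqF.
elim: k => [|k IH]; first by rewrite big_ord0 addr0 divff.
rewrite big_ord_recr /= IH.
have hk : b' + k%:R != 0 by rewrite gt_eqF // bj_gt0.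
rewrite -natr1; field; rewrite hk hb' //.
Qed.

Lemma CDrel : CD M d b c = CD M d (b + 1) c * \prod_(k < M) ((b + k%:R) / b).
Proof.
rewrite /CD -big_split /=; apply: eq_bigr => k _; rewrite -tele // -big_split /=.
apply: eq_bigr => j _.
have h1 : b + j%:R != 0 by rewrite gt_eqF // bj_gt0.
have h2 : b + 1 + j%:R != 0 by rewrite gt_eqF // bj_gt0 // ltr_wpDr.
field; rewrite h1 h2 //.
Qed.

Lemma dtrel n : dtilde2 M d n.+1 b c = dtilde2 M d n (b + 1) c * ((b + M%:R) / b).
Proof.
rewrite /dtilde2 -tele // -big_split /=; apply: eq_bigr => j _.
have h1 : b + j%:R != 0 by rewrite gt_eqF // bj_gt0.
have h2 : b + 1 + j%:R != 0 by rewrite gt_eqF // bj_gt0 // ltr_wpDr.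
rewrite -natr1; field; rewrite h1 h2 //.
Qed.

Lemma PKrel : CD M d b c * dtilde2 M d 0 b c = CD M d (b + 1) c * \prod_(l < M) Kf l.
Proof.
rewrite CDrel -mulrA; congr (_ * _); rewrite /dtilde2 -big_split /=; apply: eq_bigr => j _.
have h1 : b + j%:R != 0 by rewrite gt_eqF // bj_gt0.
rewrite /Kf; field; rewrite h1 bn0 //.
Qed.


Lemma pwN y : powR c (- y) = (powR c y)^-1.
Proof. exact: powRN. Qed.

Lemma claim1 x : PDn M d 0 x b c = XiD M d x (b + 1) c.
Proof.
rewrite PDn_E XiD_E.
have -> : \det (CM M.+1 (PDf 0 b) x) = \det (CM M.+1 Fe x).
  congr (\det _); apply: CM_eq => l hl z; rewrite /PDf /Fe; case: ifP => // _.
  by rewrite PmE Fh0 mulr1.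
rewrite W_Fe /CDn -(mulrA ((-1) ^+ M)) PKrel pwN.
have h1 := CD_gt0 (ltr_wpDr ler01 b0 : 0 < b + 1).
have h2 := PK_gt0.
have h3 := pw_neq0 x.
have hs : (-1) ^+ M != 0 :> R by rewrite signr_eq0.
field; rewrite h3 hs gt_eqF // gt_eqF //.
Qed.

Lemma alg2 (s cx q PK B0 B1 V0 V1 X1 U CD0 CD1 dt bb m nr : R) :
  s != 0 -> cx != 0 -> q != 0 -> PK != 0 -> X1 != 0 -> CD0 != 0 -> CD1 != 0 ->
  dt != 0 -> bb != 0 -> bb + m != 0 -> q - 1 != 0 -> nr != 0 ->
  s * (cx * q) * PK * B1 * V0
    = s * cx * PK * B0 * V1 + X1 * (-1 * s * cx * (PK * ((q - 1) * nr / bb)) * U) ->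
  q * (bb + m) / (CD0^-1 * X1) *
   (CD1^-1 * B1 * ((s * CD0 * (dt * ((bb + m) / bb)))^-1 / cx * V0) -
    CD1^-1 * B0 * ((s * CD0 * (dt * ((bb + m) / bb)))^-1 / (cx * q) * V1))
  = (1 - q) * nr * ((s * CD1 * dt)^-1 / cx * U).
Proof.
move=> hs hcx hc hPK hX1 hC0 hC1 hdt hb hbm hc1 hn h.
have hU : U = (s * (cx * q) * PK * B1 * V0 - s * cx * PK * B0 * V1)
   / (X1 * (-1 * s * cx * (PK * ((q - 1) * nr / bb)))).
  rewrite h; field.
  by rewrite hs hcx hPK hX1 hc1 hn hb.
rewrite hU; field.
by rewrite hs hcx hc hPK hX1 hC0 hC1 hdt hb hbm hc1 hn.
Qed.

Lemma claim2 n x : XiD M d (x + 1) b c != 0 ->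
  c * (b + M%:R) / XiD M d (x + 1) b c *
       (XiD M d (x + 1) (b + 1) c * PDn M d n.+1 x b c
        - XiD M d x (b + 1) c * PDn M d n.+1 (x + 1) b c)
     = (1 - c) * (n.+1)%:R * PDn M d n.+1.-1 x (b + 1) c.
Proof.
move=> hX.
have dj := DJ M (Phi n.+1) x.
rewrite !Phi_Fe !Phi_PD !Phi_X W_G !W_Fe exprS !pw1 in dj.
rewrite !XiD_E !PDn_E /CDn dtrel !pwN !pw1 /= in hX *.
have hX1 : \det (CM M (xif b) (x + 1)) != 0.
  by apply: contraNneq hX => ->; rewrite mulr0.
apply: (alg2 _ _ _ _ hX1 _ _ _ _ _ _ _ dj).
- by rewrite signr_eq0.
- exact: pw_neq0.
- exact: cn0.
- by rewrite gt_eqF // PK_gt0.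
- by rewrite gt_eqF // CD_gt0.
- by rewrite gt_eqF // CD_gt0 // ltr_wpDr.
- by rewrite gt_eqF // dt_gt0 // ltr_wpDr.
- exact: bn0.
- by rewrite gt_eqF // bj_gt0.
- by rewrite subr_eq0 lt_eqF.
- by rewrite pnatr_eq0.
Qed.

Lemma alg3 (s cx q PK X0 X1 U0 Um V B0 CD0 CD1 dt bb m nr x : R) :
  s != 0 -> cx != 0 -> q != 0 -> PK != 0 -> B0 != 0 -> CD0 != 0 -> CD1 != 0 ->
  dt != 0 -> bb != 0 -> bb + m != 0 -> q - 1 != 0 -> 1 - q != 0 -> nr != 0 ->
  (x + bb + m) * X0 * (-1 * s * cx * (PK * ((q - 1) * nr / bb)) * U0)
    - q * x * X1 * (-1 * s * (cx / q) * (PK * ((q - 1) * nr / bb)) * Um)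
  = (- (bb * (1 - q)) - - ((nr + bb) * (1 - q))) * V * (s * cx * PK * B0) ->
  (q * (x + bb + m) * (CD0^-1 * X0) * ((s * CD1 * dt)^-1 / cx * U0)
    - x * (CD0^-1 * X1) * ((s * CD1 * dt)^-1 / (cx / q) * Um))
    / (q * (bb + m) * (CD1^-1 * B0))
  = (s * CD0 * (dt * ((bb + m) / bb)))^-1 / cx * V.
Proof.
move=> hs hcx hc hPK hB0 hC0 hC1 hdt hb hbm hc1 hc2 hn h.
have hD : - (bb * (1 - q)) - - ((nr + bb) * (1 - q)) != 0.
  have -> : - (bb * (1 - q)) - - ((nr + bb) * (1 - q)) = nr * (1 - q) by ring.
  by rewrite mulf_neq0.
have hV : V = ((x + bb + m) * X0 * (-1 * s * cx * (PK * ((q - 1) * nr / bb)) * U0)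
    - q * x * X1 * (-1 * s * (cx / q) * (PK * ((q - 1) * nr / bb)) * Um))
    / ((- (bb * (1 - q)) - - ((nr + bb) * (1 - q))) * (s * cx * PK * B0)).
  by rewrite h; field; rewrite hB0 hPK hcx hs hD.
rewrite hV; field.
by rewrite hB0 hPK hcx hs hD hb hc hbm hdt hC0 hC1 ?hc1 ?hc2 ?hn.
Qed.

Lemma claim3 n x : (0 < M)%N -> XiD M d x (b + 1) c != 0 ->
  (c * (x + b + M%:R) * XiD M d x b c * PDn M d n.+1.-1 x (b + 1) c
      - x * XiD M d (x + 1) b c * PDn M d n.+1.-1 (x - 1) (b + 1) c)
     / (c * (b + M%:R) * XiD M d x (b + 1) c)
     = PDn M d n.+1 x b c.
Proof.
move=> m0 hX.
have ga := GA (m:=M) (f:=Phi n.+1) (lam:=lamf n.+1) (b:=b) (c:=c) x m0 (recPhi n.+1).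
have hM1 : (M.+1 < M)%N = false by lia.
have hM2 : (M.+1 == M) = false by lia.
rewrite /lamf hM1 hM2 ltnn eqxx !Phi_X !W_G Phi_PD Phi_Fe W_Fe exprS !pwm1 in ga.
rewrite !XiD_E !PDn_E /CDn dtrel !pwN !pwm1 /= in hX *.
have hB0 : \det (CM M (xif (b + 1)) x) != 0.
  by apply: contraNneq hX => ->; rewrite mulr0.
apply: (alg3 _ _ _ _ hB0 _ _ _ _ _ _ _ _ ga).
- by rewrite signr_eq0.
- exact: pw_neq0.
- exact: cn0.
- by rewrite gt_eqF // PK_gt0.
- by rewrite gt_eqF // CD_gt0.
- by rewrite gt_eqF // CD_gt0 // ltr_wpDr.
- by rewrite gt_eqF // dt_gt0 // ltr_wpDr.
- exact: bn0.
- by rewrite gt_eqF // bj_gt0.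
- by rewrite subr_eq0 lt_eqF.
- by rewrite subr_eq0 gt_eqF.
- by rewrite pnatr_eq0.
Qed.

End Main.

Theorem mainTheorem4 (R : realType) (beta c : R) (M : nat) (d : nat -> nat) :
  0 < beta -> 0 < c -> c < 1 -> (1 <= M)%N ->
  (forall i j : nat, (i < j)%N -> (j < M)%N -> (d i < d j)%N) ->
  (forall i : nat, (i < M)%N -> (0 < d i)%N) ->
  (forall x : R, PDn M d 0 x beta c = XiD M d x (beta + 1) c) /\
  (forall (n : nat) (x : R), (1 <= n)%N ->
     XiD M d (x + 1) beta c != 0 ->
     c * (beta + M%:R) / XiD M d (x + 1) beta c *
       (XiD M d (x + 1) (beta + 1) c * PDn M d n x beta c
        - XiD M d x (beta + 1) c * PDn M d n (x + 1) beta c)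
     = (1 - c) * n%:R * PDn M d n.-1 x (beta + 1) c) /\
  (forall (n : nat) (x : R), (1 <= n)%N ->
     XiD M d x (beta + 1) c != 0 ->
     (c * (x + beta + M%:R) * XiD M d x beta c * PDn M d n.-1 x (beta + 1) c
      - x * XiD M d (x + 1) beta c * PDn M d n.-1 (x - 1) (beta + 1) c)
     / (c * (beta + M%:R) * XiD M d x (beta + 1) c)
     = PDn M d n x beta c).
Proof.
move=> b0 c0 c1 M1 dinc _.
split; first by move=> x; exact: (claim1 b0 c0 c1 dinc).
split.
- by move=> [|n] x // _ hX; exact: (claim2 b0 c0 c1 dinc).
- by move=> [|n] x // _ hX; exact: (claim3 b0 c0 c1 dinc).
Qed.
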